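(* Let $h_{11},h_{20},h_{31},h_{40}\in\mathbb{R}$ and consider the planar Hamiltonian system $$\dot x=\frac{\partial \bar H_2}{\partial y}(x,y),\qquad \dot y=-\frac{\partial \bar H_2}{\partial x}(x,y),$$ where $$\bar H_2(x,y)=\tfrac12 y^2+(8h_{11}h_{20}+4h_{31})x^3+(4h_{20}-2h_{11}^2)x^2y+\tfrac12 y^3+\big[2h_{11}^2(h_{11}^2+4h_{20})+8(h_{11}h_{31}-h_{40})\big]x^4+(8h_{11}h_{20}+4h_{31})x^3y+(2h_{20}-h_{11}^2)x^2y^2+\tfrac18 y^4 .$$ Consider the conditions (A) $h_{31}\neq -2h_{11}h_{20}$; (B) $h_{31}=-2h_{11}h_{20}$ and $h_{20}^2+h_{40}>0$; (C) $h_{31}=-2h_{11}h_{20}$ and $h_{20}^2+h_{40}<0$. Then the origin is an isolated nilpotent singular point of this system if and only if one of (A), (B), (C) holds. Moreover, the origin is (i) a cusp of order 1 if and only if (A) holds; (ii) a nilpotent saddle of order 1 if and only if (B) holds; (iii) a nilpotent center of order 1 if and only if (C) holds.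
   Context: Let $H(x,y)=\frac{\omega}{2}y^2+\sum_{i+j\ge 3}h_{ij}x^iy^j$ with $\omega>0$ be analytic near the origin (so the origin is a nilpotent critical point of $\dot x=H_y,\ \dot y=-H_x$). By the implicit function theorem there is a unique analytic function $\varphi(x)=O(x^2)$ with $H_y(x,\varphi(x))=0$ for $|x|$ small. Write $H_0^*(x)=H(x,\varphi(x))=\sum_{j\ge k}h_jx^j$ with $h_k\neq 0$, $k\ge 2$ (when $H_0^*\not\equiv 0$). The origin is called a cusp of order $m$ if $k=2m+1$; a nilpotent center of order $m$ if $k=2m+2$ and $h_k>0$; a nilpotent saddle of order $m$ if $k=2m+2$ and $h_k<0$. *)

(* Defs.v *)
From Stdlib Require Import Reals.
From Coquelicot Require Import Coquelicot.
Open Scope R_scope.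

Definition Hx (H : R -> R -> R) (x y : R) : R := Derive (fun s => H s y) x.
Definition Hy (H : R -> R -> R) (x y : R) : R := Derive (fun t => H x t) y.

Definition field1 (H : R -> R -> R) (x y : R) : R := Hy H x y.
Definition field2 (H : R -> R -> R) (x y : R) : R := - Hx H x y.

Definition j11 H x y := Derive (fun s => field1 H s y) x.
Definition j12 H x y := Derive (fun t => field1 H x t) y.
Definition j21 H x y := Derive (fun s => field2 H s y) x.
Definition j22 H x y := Derive (fun t => field2 H x t) y.

Definition singular_origin (H : R -> R -> R) : Prop :=
  field1 H 0 0 = 0 /\ field2 H 0 0 = 0.

Definition nilpotent_origin (H : R -> R -> R) : Prop :=
  let a := j11 H 0 0 in let b := j12 H 0 0 in
  let c := j21 H 0 0 in let d := j22 H 0 0 in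
  (a * a + b * c = 0 /\ a * b + b * d = 0 /\
   c * a + d * c = 0 /\ c * b + d * d = 0) /\
  ~ (a = 0 /\ b = 0 /\ c = 0 /\ d = 0).

Definition isolated_singular_origin (H : R -> R -> R) : Prop :=
  singular_origin H /\
  exists eps, 0 < eps /\
    forall x y, 0 < x * x + y * y < eps * eps ->
      ~ (field1 H x y = 0 /\ field2 H x y = 0).

Definition isolated_nilpotent_singular_origin (H : R -> R -> R) : Prop :=
  isolated_singular_origin H /\ nilpotent_origin H.

(* H_0^*(x) = H(x, phi(x)) = sum_{j>=k} h_j x^j with h_k = hk <> 0, where
   phi is the analytic function with phi(x) = O(x^2) and H_y(x, phi(x)) = 0
   for |x| small (unique by the implicit function theorem, so an existential
   over phi is faithful).  Analyticity is expressed by convergent power series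
   on a neighbourhood of 0. *)
Definition H0star_leading (H : R -> R -> R) (k : nat) (hk : R) : Prop :=
  exists delta : R, 0 < delta /\
  exists (phi : R -> R) (p a : nat -> R),
    p 0%nat = 0 /\ p 1%nat = 0 /\
    (forall x, Rabs x < delta -> is_pseries p x (phi x)) /\
    (forall x, Rabs x < delta -> Hy H x (phi x) = 0) /\
    (forall x, Rabs x < delta -> is_pseries a x (H x (phi x))) /\
    (forall j, (j < k)%nat -> a j = 0) /\
    a k = hk /\ hk <> 0.

Definition cusp_of_order (H : R -> R -> R) (m : nat) : Prop :=
  exists hk, H0star_leading H (2 * m + 1) hk.

Definition nilpotent_center_of_order (H : R -> R -> R) (m : nat) : Prop :=
  exists hk, H0star_leading H (2 * m + 2) hk /\ 0 < hk.

Definition nilpotent_saddle_of_order (H : R -> R -> R) (m : nat) : Prop :=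
  exists hk, H0star_leading H (2 * m + 2) hk /\ hk < 0.

Definition H2bar (h11 h20 h31 h40 : R) (x y : R) : R :=
  /2 * y ^ 2
  + (8 * h11 * h20 + 4 * h31) * x ^ 3
  + (4 * h20 - 2 * h11 ^ 2) * x ^ 2 * y
  + /2 * y ^ 3
  + (2 * h11 ^ 2 * (h11 ^ 2 + 4 * h20) + 8 * (h11 * h31 - h40)) * x ^ 4
  + (8 * h11 * h20 + 4 * h31) * x ^ 3 * y
  + (2 * h20 - h11 ^ 2) * x ^ 2 * y ^ 2
  + /8 * y ^ 4.

(* Main.v *)
Require Import Defs.
From Stdlib Require Import Reals Lra Lia Psatz.
From Coquelicot Require Import Coquelicot.
Open Scope R_scope.


Definition aa h11 h20 h31 := 8*h11*h20 + 4*h31.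
Definition bb h11 h20 := 4*h20 - 2*h11^2.
Definition cc h11 h20 h31 h40 := 2 * h11 ^ 2 * (h11 ^ 2 + 4 * h20) + 8 * (h11 * h31 - h40).

Lemma HyE h11 h20 h31 h40 x y : Hy (H2bar h11 h20 h31 h40) x y =
  y + bb h11 h20 * x^2 + 3/2 * y^2 + aa h11 h20 h31 * x^3 + bb h11 h20 * x^2 * y + /2 * y^3.
Proof. unfold Hy, H2bar, aa, bb. apply is_derive_unique. auto_derive; auto. field. Qed.

Lemma HxE h11 h20 h31 h40 x y : Hx (H2bar h11 h20 h31 h40) x y =
  3 * aa h11 h20 h31 * x^2 + 2 * bb h11 h20 * x * y + 4 * cc h11 h20 h31 h40 * x^3
  + 3 * aa h11 h20 h31 * x^2 * y + bb h11 h20 * x * y^2.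
Proof. unfold Hx, H2bar, aa, bb, cc. apply is_derive_unique. auto_derive; auto. field. Qed.

Lemma nilp h11 h20 h31 h40 : nilpotent_origin (H2bar h11 h20 h31 h40).
Proof.
  unfold nilpotent_origin, j11, j12, j21, j22, field1, field2.
  set (H := H2bar h11 h20 h31 h40).
  assert (E11 : Derive (fun s => Hy H s 0) 0 = 0).
  { rewrite (Derive_ext _ (fun s => bb h11 h20 * s^2 + aa h11 h20 h31 * s^3)).
    apply is_derive_unique. auto_derive; auto. ring.
    intro t. unfold H; rewrite HyE. ring. }
  assert (E12 : Derive (fun t => Hy H 0 t) 0 = 1).
  { rewrite (Derive_ext _ (fun t => t + 3/2 * t^2 + /2 * t^3)).
    apply is_derive_unique. auto_derive; auto. ring.
    intro t. unfold H; rewrite HyE. ring. }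
  assert (E21 : Derive (fun s => - Hx H s 0) 0 = 0).
  { rewrite (Derive_ext _ (fun s => - (3 * aa h11 h20 h31 * s^2 + 4 * cc h11 h20 h31 h40 * s^3))).
    apply is_derive_unique. auto_derive; auto. ring.
    intro t. unfold H; rewrite HxE. ring. }
  assert (E22 : Derive (fun t => - Hx H 0 t) 0 = 0).
  { rewrite (Derive_ext _ (fun t => 0)).
    apply is_derive_unique. auto_derive; auto.
    intro t. unfold H; rewrite HxE. ring. }
  rewrite E11, E12, E21, E22. split. repeat split; ring. lra.
Qed.

Lemma sq_lt_abs u e : 0 < e -> u * u < e * e -> Rabs u < e.
Proof. intros He Hu. destruct (Rle_or_lt e (Rabs u)); auto.
  assert (e*e <= Rabs u * Rabs u) by nra.
  rewrite <- Rabs_mult, Rabs_right in H0 by nra. lra. Qed.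

Lemma iso_a a b c : a <> 0 ->
  exists eps, 0 < eps /\ forall x y, 0 < x*x + y*y < eps*eps ->
   ~ ( y + b * x^2 + 3/2 * y^2 + a * x^3 + b * x^2 * y + /2 * y^3 = 0 /\
       - (3 * a * x^2 + 2 * b * x * y + 4 * c * x^3 + 3 * a * x^2 * y + b * x * y^2) = 0).
Proof.
  intros Ha. set (M := 1 + Rabs a + Rabs b + Rabs c).
  assert (HM : 1 <= M) by (unfold M; pose proof (Rabs_pos a); pose proof (Rabs_pos b); pose proof (Rabs_pos c); lra).
  assert (HaM : Rabs a <= M) by (unfold M; pose proof (Rabs_pos b); pose proof (Rabs_pos c); lra).
  assert (HbM : Rabs b <= M) by (unfold M; pose proof (Rabs_pos a); pose proof (Rabs_pos c); lra).
  assert (HcM : Rabs c <= M) by (unfold M; pose proof (Rabs_pos b); pose proof (Rabs_pos a); lra).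
  assert (Hap : 0 < Rabs a) by (apply Rabs_pos_lt; auto).
  exists (Rmin (/4) (Rabs a / (10 * M^2))).
  assert (He1 := Rmin_l (/4) (Rabs a / (10 * M^2))).
  assert (He2 := Rmin_r (/4) (Rabs a / (10 * M^2))).
  set (eps := Rmin (/4) (Rabs a / (10 * M^2))) in *.
  assert (Hep : 0 < eps).
  { unfold eps. apply Rmin_pos. lra. apply Rdiv_lt_0_compat; nra. }
  split; auto. intros x y [Hpos Hlt] [E1 E2].
  assert (Hx : Rabs x < eps) by (apply sq_lt_abs; nra).
  assert (Hy : Rabs y < eps) by (apply sq_lt_abs; nra).
  assert (Hx2 : Rabs x < Rabs a / (10 * M^2)) by lra.
  assert (Hxa : Rabs x * (10 * M^2) < Rabs a).
  { apply (Rmult_lt_compat_r (10*M^2)) in Hx2; [|nra].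
    unfold Rdiv in Hx2. rewrite Rmult_assoc, Rinv_l in Hx2 by nra. lra. }
  destruct (Req_dec x 0) as [Hx0|Hx0].
  { subst x. assert (y * (1 + 3/2*y + /2*y^2) = 0) by (rewrite <- E1; ring).
    apply Rmult_integral in H. destruct H as [H|H].
    - subst y. lra.
    - assert (Rabs y < 1/4) by lra. apply Rabs_def2 in H0. nra. }
  assert (Hxp : 0 < Rabs x) by (apply Rabs_pos_lt; auto).
  assert (HyB : -/4 < y < /4) by (assert (Hq : Rabs y < /4) by lra; apply Rabs_def2 in Hq; lra).
  assert (Hx1 : Rabs x < /4) by lra.
  assert (Hxx : x^2 = Rabs x * Rabs x) by (rewrite <- Rabs_mult, Rabs_right; nra).
  set (F := 1 + 3/2*y + /2*y^2 + b * x^2).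
  assert (HbX : Rabs (b * x^2) <= M * x^2).
  { rewrite Rabs_mult, (Rabs_right (x^2)) by nra. nra. }
  assert (HM2 : M * x^2 <= /100).
  { rewrite Hxx. assert (Hq1 : Rabs x * (10*M^2) < M) by nra.
    assert (Hq2 : Rabs x * (10 * M) < 1).
    { apply (Rmult_lt_reg_r M); [lra|]. nra. }
    assert (Hq3 : (Rabs x * (10*M))^2 < 1) by nra.
    assert (Hq4 : M * (Rabs x * Rabs x) <= M * M * (Rabs x * Rabs x)) by nra.
    nra. }
  assert (HF : /2 <= F).
  { unfold F. assert (Hq : -(M*x^2) <= b*x^2) by (pose proof (Rle_abs (-(b*x^2))) as Hq; rewrite Rabs_Ropp in Hq; lra). nra. }
  assert (EqY : y * F = - (x^2 * (b + a * x))) by (unfold F; lra).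
  assert (Hy1 : Rabs y * F <= M * x^2).
  { replace (Rabs y * F) with (Rabs (y * F)) by (rewrite Rabs_mult, (Rabs_right F); lra).
    rewrite EqY, Rabs_Ropp, Rabs_mult, (Rabs_right (x^2)) by nra.
    rewrite (Rmult_comm M). apply Rmult_le_compat_l; [nra|].
    eapply Rle_trans; [apply Rabs_triang|]. rewrite Rabs_mult.
    assert (Rabs a * Rabs x <= Rabs a * 1) by (apply Rmult_le_compat_l; [apply Rabs_pos|lra]).
    unfold M; pose proof (Rabs_pos c); lra. }
  assert (Hy2 : Rabs y <= 2 * M * x^2).
  { assert (Rabs y * (/2) <= Rabs y * F) by (apply Rmult_le_compat_l; [apply Rabs_pos|lra]). lra. }
  assert (EK : x * (3 * a * x * (1 + y) + (2 * b * y + 4 * c * x^2 + b * y^2)) = 0)   by nra.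
  apply Rmult_integral in EK. destruct EK as [EK|EK]; [contradiction|].
  assert (EK2 : Rabs (3 * a * x * (1+y)) = Rabs (2 * b * y + 4 * c * x^2 + b * y^2)).
  { rewrite <- Rabs_Ropp. f_equal. lra. }
  rewrite !Rabs_mult, (Rabs_right 3), (Rabs_right (1+y)) in EK2 by lra.
  assert (Rabs (2 * b * y + 4 * c * x^2 + b * y^2) <= 3 * M * Rabs y + 4 * M * x^2).
  { eapply Rle_trans; [apply Rabs_triang|].
    eapply Rle_trans; [apply Rplus_le_compat_r; apply Rabs_triang|].
    rewrite !Rabs_mult, (Rabs_right 2), (Rabs_right 4), (Rabs_right (x^2)), (Rabs_right (y^2)) by nra.
    assert (Hyy : y^2 = Rabs y * Rabs y) by (rewrite <- Rabs_mult, Rabs_right; nra).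
    assert (y^2 <= Rabs y) by (rewrite Hyy; pose proof (Rabs_pos y); nra).
    assert (0 <= Rabs y) by apply Rabs_pos.
    assert (Rabs b * Rabs y <= M * Rabs y) by (apply Rmult_le_compat_r; lra).
    assert (Rabs b * y^2 <= Rabs b * Rabs y) by (apply Rmult_le_compat_l; [apply Rabs_pos|lra]).
    assert (Rabs c * x^2 <= M * x^2) by (apply Rmult_le_compat_r; nra).
    lra. }
  assert (Hq1 : 9/4 * (Rabs a * Rabs x) <= 3 * Rabs a * Rabs x * (1+y)).
  { assert (0 <= Rabs a * Rabs x) by nra. nra. }
  assert (Hq2 : M * Rabs y <= M * (2 * M * x^2)) by (apply Rmult_le_compat_l; lra).
  assert (Hq3 : M * x^2 <= M * M * x^2) by (assert (0 <= x^2) by nra; nra).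
  assert (9/4 * (Rabs a * Rabs x) <= 10 * M^2 * x^2) by (simpl; nra).
  rewrite Hxx in H0. nra.
Qed.

Lemma iso_0 a b c : a = 0 -> c <> b^2/2 ->
  exists eps, 0 < eps /\ forall x y, 0 < x*x + y*y < eps*eps ->
   ~ ( y + b * x^2 + 3/2 * y^2 + a * x^3 + b * x^2 * y + /2 * y^3 = 0 /\
       - (3 * a * x^2 + 2 * b * x * y + 4 * c * x^3 + 3 * a * x^2 * y + b * x * y^2) = 0).
Proof.
  intros -> Hc. exists (/2). split; [lra|]. intros x y [Hp Hl] [E1 E2].
  assert (Hy : Rabs y < /2) by (apply sq_lt_abs; nra).
  apply Rabs_def2 in Hy.
  assert (EW : (y + b*x^2 + /2*y^2) * (1 + y) = 0) by nra.
  apply Rmult_integral in EW. destruct EW as [EW|EW]; [|lra].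
  assert (EW2 : 2*b*x*(y + b*x^2 + /2*y^2) = 0) by (rewrite EW; ring).
  assert (EK : x * x * ((4*c - 2*b^2) * x) = 0) by nra.
  apply Rmult_integral in EK. destruct EK as [EK|EK].
  - apply Rmult_integral in EK. destruct EK as [EK|EK]; subst x;
    assert (y * (1 + /2 * y) = 0) by nra; apply Rmult_integral in H; destruct H; nra.
  - apply Rmult_integral in EK. destruct EK as [EK|EK].
    + apply Hc. lra.
    + subst x. assert (y * (1 + /2 * y) = 0) by nra; apply Rmult_integral in H; destruct H; nra.
Qed.

Lemma noniso b c : c = b^2/2 -> forall eps, 0 < eps -> exists x y, 0 < x*x + y*y < eps*eps /\
   ( y + b * x^2 + 3/2 * y^2 + 0 * x^3 + b * x^2 * y + /2 * y^3 = 0 /\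
       - (3 * 0 * x^2 + 2 * b * x * y + 4 * c * x^3 + 3 * 0 * x^2 * y + b * x * y^2) = 0).
Proof.
  intros Hc eps He.
  set (x := Rmin (eps/2) (/(2*(Rabs b + 1)))).
  assert (Hb0 := Rabs_pos b).
  assert (Hx1 : x <= eps/2) by apply Rmin_l.
  assert (Hx2 : x <= /(2*(Rabs b + 1))) by apply Rmin_r.
  assert (Hxp : 0 < x) by (apply Rmin_pos; [lra| apply Rinv_0_lt_compat; lra]).
  assert (Hbx : 2 * (Rabs b + 1) * x <= 1).
  { apply (Rmult_le_compat_l (2*(Rabs b + 1))) in Hx2; [|lra].
    rewrite Rinv_r in Hx2 by lra. lra. }
  assert (Hbx2 : Rabs (2*b*x^2) <= x * (2 * Rabs b * x)).
  { rewrite !Rabs_mult, (Rabs_right 2), (Rabs_right (x^2)) by nra. right; ring. }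
  assert (Hbx3 : 2 * Rabs b * x < 1) by nra.
  assert (Hu : 0 <= 1 - 2*b*x^2).
  { pose proof (Rle_abs (2*b*x^2)). nra. }
  set (s := sqrt (1 - 2*b*x^2)).
  assert (Hs : s * s = 1 - 2*b*x^2) by (apply sqrt_sqrt; auto).
  assert (Hs0 : 0 <= s) by apply sqrt_pos.
  set (y := s - 1).
  assert (HW : y + b * x^2 + /2 * y^2 = 0) by (unfold y; nra).
  exists x, y. split; [split|split].
  - nra.
  - assert (Hyb : Rabs y * (s + 1) = Rabs (2*b*x^2)).
    { rewrite <- (Rabs_right (s+1)) by lra. rewrite <- Rabs_mult, <- (Rabs_Ropp (2*b*x^2)). f_equal. unfold y. nra. }
    assert (Rabs y <= x * (2 * Rabs b * x)).
    { pose proof (Rabs_pos y). nra. }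
    assert (Rabs y <= x) by nra.
    assert (y * y <= x * x).
    { assert (y*y = Rabs y * Rabs y) by (rewrite <- Rabs_mult; rewrite Rabs_right; nra).
      pose proof (Rabs_pos y). nra. }
    nra.
  - nra.
  - subst c. nra.
Qed.

Lemma cplus f h x0 : continuity_pt f x0 -> continuity_pt h x0 -> continuity_pt (fun x => f x + h x) x0.
Proof. intros; exact (continuity_pt_plus f h x0 H H0). Qed.
Lemma cminus f h x0 : continuity_pt f x0 -> continuity_pt h x0 -> continuity_pt (fun x => f x - h x) x0.
Proof. intros; exact (continuity_pt_minus f h x0 H H0). Qed.
Lemma cmult f h x0 : continuity_pt f x0 -> continuity_pt h x0 -> continuity_pt (fun x => f x * h x) x0.
Proof. intros; exact (continuity_pt_mult f h x0 H H0). Qed.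
Lemma copp f x0 : continuity_pt f x0 -> continuity_pt (fun x => - f x) x0.
Proof. intros; exact (continuity_pt_opp f x0 H). Qed.
Lemma cconst (c : R) x0 : continuity_pt (fun _ => c) x0.
Proof. apply continuity_pt_const. intros ? ?; reflexivity. Qed.
Lemma cid x0 : continuity_pt (fun x => x) x0.
Proof. apply continuity_pt_id. Qed.
Lemma cpow f n x0 : continuity_pt f x0 -> continuity_pt (fun x => f x ^ n) x0.
Proof. intros H; induction n; simpl. apply cconst. apply cmult; auto. Qed.

Ltac cont := repeat first [ assumption | apply cconst | apply cid | apply cplus | apply cminus
   | apply cmult | apply copp | apply cpow ].

Lemma agree0 f h r : 0 < r -> continuity_pt f 0 -> continuity_pt h 0 ->
  (forall x, x <> 0 -> Rabs x < r -> f x = h x) -> f 0 = h 0.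
Proof.
  intros Hr Hf Hh E. destruct (Req_dec (f 0) (h 0)) as [|Hne]; auto. exfalso.
  set (e := Rabs (f 0 - h 0) / 2).
  assert (He : e > 0) by (unfold e; assert (f 0 - h 0 <> 0) by (intro; apply Hne; lra); apply Rabs_pos_lt in H; lra).
  destruct (Hf e He) as [a1 [Ha1 H1]]. destruct (Hh e He) as [a2 [Ha2 H2]].
  set (x := Rmin r (Rmin a1 a2) / 2).
  assert (Hm : 0 < Rmin r (Rmin a1 a2)) by (repeat apply Rmin_pos; lra).
  assert (Hxr : x < r) by (unfold x; pose proof (Rmin_l r (Rmin a1 a2)); lra).
  assert (Hx1 : x < a1) by (unfold x; pose proof (Rmin_r r (Rmin a1 a2)); pose proof (Rmin_l a1 a2); lra).
  assert (Hx2 : x < a2) by (unfold x; pose proof (Rmin_r r (Rmin a1 a2)); pose proof (Rmin_r a1 a2); lra).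
  assert (Hxp : 0 < x) by (unfold x; lra).
  assert (D : D_x no_cond 0 x) by (split; [exact I| lra]).
  assert (Dd : R_dist x 0 = x) by (unfold R_dist; rewrite Rminus_0_r, Rabs_right; lra).
  assert (Hd1 : dist R_met x 0 < a1) by (eapply Rle_lt_trans; [right; exact Dd| exact Hx1]).
  assert (Hd2 : dist R_met x 0 < a2) by (eapply Rle_lt_trans; [right; exact Dd| exact Hx2]).
  specialize (H1 x (conj D Hd1)).
  specialize (H2 x (conj D Hd2)).
  simpl in H1, H2. unfold R_dist in H1, H2.
  rewrite E in H1 by (try rewrite Rabs_right; lra).
  assert (Rabs (f 0 - h 0) <= Rabs (h x - f 0) + Rabs (h x - h 0)).
  { replace (f 0 - h 0) with (- (h x - f 0) + (h x - h 0)) by ring.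
    eapply Rle_trans; [apply Rabs_triang|]. rewrite Rabs_Ropp. lra. }
  unfold e in *. lra.
Qed.

Lemma ex_cv u y : ex_pseries u y -> Rbar_le (Rabs y) (CV_radius u).
Proof.
  intros He. destruct (Rbar_le_lt_dec (Rabs y) (CV_radius u)) as [|Hl]; auto.
  exfalso. apply (CV_disk_outside u y Hl). apply ex_series_lim_0.
  apply ex_pseries_R. auto.
Qed.

Lemma good_cv u r : (forall x, Rabs x < r -> ex_pseries u x) ->
  forall x, Rabs x < r -> Rbar_lt (Rabs x) (CV_radius u).
Proof.
  intros Hg x Hx. set (y := (Rabs x + r)/2).
  assert (Hy : Rabs y < r) by (unfold y; pose proof (Rabs_pos x); rewrite Rabs_right; lra).
  apply Rbar_lt_le_trans with (Rabs y). simpl. pose proof (Rabs_pos x). rewrite (Rabs_right y); unfold y; lra.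
  apply ex_cv. auto.
Qed.

Lemma CV_decr u k : CV_radius (PS_decr_n u k) = CV_radius u.
Proof.
  induction k. apply CV_radius_ext. intro n. reflexivity.
  rewrite <- IHk, <- (CV_radius_decr_1 (PS_decr_n u k)). apply CV_radius_ext. intro n.
  unfold PS_decr_1, PS_decr_n. f_equal. lia.
Qed.

Lemma coef_lim A k r hk : 0 < r -> Rbar_lt 0 (CV_radius A) ->
  (forall j, (j < k)%nat -> A j = 0) ->
  (forall x, x <> 0 -> Rabs x < r -> x ^ k * hk x = PSeries A x) ->
  continuity_pt hk 0 -> A k = hk 0.
Proof.
  intros Hr Hcv Hz E Hc.
  transitivity (PSeries (PS_decr_n A k) 0).
  { rewrite PSeries_0. unfold PS_decr_n. f_equal; lia. }
  apply (agree0 _ _ r); auto.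
  - apply PSeries_continuity. rewrite CV_decr, Rabs_R0. auto.
  - intros x Hx Hxr. specialize (E x Hx Hxr). rewrite (PSeries_decr_n_aux A k x Hz) in E. apply (Rmult_eq_reg_l (x^k)). lra. apply pow_nonzero; auto.
Qed.

Definition Qf h11 h20 h31 h40 (x gv : R) : R :=
  /2 * gv^2 + bb h11 h20 * gv + cc h11 h20 h31 h40 + aa h11 h20 h31 * x * gv
  + x^2 * (/2 * gv^3 + (2*h20 - h11^2) * gv^2) + /8 * x^4 * gv^4.

Lemma H_expand h11 h20 h31 h40 x gv :
  H2bar h11 h20 h31 h40 x (x^2 * gv) = x^3 * (aa h11 h20 h31 + x * Qf h11 h20 h31 h40 x gv).
Proof. unfold H2bar, Qf, aa, bb, cc. ring. Qed.

Lemma is_ex (u : nat -> R) (x l : R) : is_pseries u x l -> ex_pseries u x.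
Proof. intros; exists l; auto. Qed.

Lemma asym h11 h20 h31 h40 delta (phi : R -> R) (p A : nat -> R) :
  0 < delta -> p 0%nat = 0 -> p 1%nat = 0 ->
  (forall x, Rabs x < delta -> is_pseries p x (phi x)) ->
  (forall x, Rabs x < delta -> Hy (H2bar h11 h20 h31 h40) x (phi x) = 0) ->
  (forall x, Rabs x < delta -> is_pseries A x (H2bar h11 h20 h31 h40 x (phi x))) ->
  A 0%nat = 0 /\ A 1%nat = 0 /\ A 2%nat = 0 /\ A 3%nat = aa h11 h20 h31 /\
  (aa h11 h20 h31 = 0 -> A 4%nat = cc h11 h20 h31 h40 - bb h11 h20 ^2 / 2).
Proof.
  intros Hd Hp0 Hp1 Hp Hy HA.
  assert (CVp : forall x, Rabs x < delta -> Rbar_lt (Rabs x) (CV_radius p)).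
  { apply good_cv. intros; eapply is_ex; eauto. }
  assert (CVA : forall x, Rabs x < delta -> Rbar_lt (Rabs x) (CV_radius A)).
  { apply good_cv. intros; eapply is_ex; eauto. }
  assert (CVA0 : Rbar_lt 0 (CV_radius A)) by (rewrite <- Rabs_R0; apply CVA; rewrite Rabs_R0; lra).
  assert (Hz : forall j, (j < 2)%nat -> p j = 0) by (intros j Hj; destruct j as [|[|j]]; auto; lia).
  remember (PSeries (PS_decr_n p 2)) as g eqn:Hgdef.
  assert (Hphi : forall x, Rabs x < delta -> phi x = x^2 * g x).
  { intros x Hx. rewrite <- (is_pseries_unique _ _ _ (Hp x Hx)). subst g. apply PSeries_decr_n_aux; auto. }
  assert (Hg : continuity_pt g 0).
  { subst g. apply PSeries_continuity. rewrite CV_decr, Rabs_R0. rewrite <- Rabs_R0; apply CVp; rewrite Rabs_R0; lra. }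
  assert (FA : forall x, Rabs x < delta -> PSeries A x = x^3 * (aa h11 h20 h31 + x * Qf h11 h20 h31 h40 x (g x))).
  { intros x Hx. rewrite (is_pseries_unique _ _ _ (HA x Hx)), Hphi, H_expand; auto. }
  set (a := aa h11 h20 h31) in *. set (b := bb h11 h20) in *.
  assert (g0 : g 0 = - b).
  { assert (E := agree0 g (fun x => - b - (3/2 * x^2 * g x ^2 + a * x + b * x^2 * g x + /2 * x^4 * g x ^3)) delta Hd Hg).
    rewrite E. ring.
    cont.
    intros x Hx Hxd. specialize (Hy x Hxd). rewrite HyE, Hphi in Hy by auto. fold a b in Hy.
    apply (Rmult_eq_reg_l (x^2)); [|apply pow_nonzero; auto].
    lra. }
  assert (A0 : A 0%nat = 0).
  { rewrite <- PSeries_0, FA by (rewrite Rabs_R0; lra). rewrite pow_i by lia. apply Rmult_0_l. }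
  assert (A1 : A 1%nat = 0).
  { rewrite (coef_lim A 1 delta (fun x => x^2 * (a + x * Qf h11 h20 h31 h40 x (g x)))); auto.
    ring. intros j Hj. replace j with 0%nat by lia. auto.
    intros x _ Hx. rewrite FA; auto; ring.
    unfold Qf. cont. }
  assert (A2 : A 2%nat = 0).
  { rewrite (coef_lim A 2 delta (fun x => x * (a + x * Qf h11 h20 h31 h40 x (g x)))); auto.
    ring. intros j Hj. destruct j as [|[|j]]; auto; lia.
    intros x _ Hx. rewrite FA; auto; ring.
    unfold Qf. cont. }
  assert (A3 : A 3%nat = a).
  { rewrite (coef_lim A 3 delta (fun x => (a + x * Qf h11 h20 h31 h40 x (g x)))); auto.
    ring. intros j Hj. destruct j as [|[|[|j]]]; auto; lia.
    intros x _ Hx. rewrite FA; auto; ring.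
    unfold Qf. cont. }
  repeat split; auto. intros Ha0.
  rewrite (coef_lim A 4 delta (fun x => Qf h11 h20 h31 h40 x (g x))); auto.
  unfold Qf. rewrite g0. fold a b. rewrite Ha0. field.
  intros j Hj. destruct j as [|[|[|[|j]]]]; auto; try lia. rewrite A3; auto.
  intros x _ Hx. rewrite FA; auto. rewrite Ha0. ring.
  unfold Qf. cont.
Qed.

Lemma sum_scal_l (c : R) h N : sum_f_R0 (fun i => c * h i) N = c * sum_f_R0 h N.
Proof. rewrite scal_sum. apply sum_eq. intros; ring. Qed.

Lemma conv N : forall f g : nat -> R, (forall n, 0 <= f n) -> (forall n, 0 <= g n) ->
  sum_f_R0 (fun n => sum_f_R0 (fun k => f k * g (n - k)%nat) n) N <= sum_f_R0 f N * sum_f_R0 g N.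
Proof.
  induction N; intros f g Hf Hg.
  - simpl. lra.
  - rewrite (decomp_sum _ (S N)) by lia. simpl pred.
    rewrite (sum_eq _ (fun i => f 0%nat * g (S i) + sum_f_R0 (fun j => f (S j) * g (i - j)%nat) i) N).
    2:{ intros i Hi. cbv beta. rewrite (decomp_sum _ (S i)) by lia. simpl pred. reflexivity. }
    rewrite plus_sum, sum_scal_l.
    specialize (IHN (fun j => f (S j)) g (fun n => Hf (S n)) Hg).
    rewrite (decomp_sum f (S N)) by lia. rewrite (decomp_sum g (S N)) by lia. simpl pred.
    simpl (f 0%nat * g (0 - 0)%nat).
    assert (HG : sum_f_R0 g N <= g 0%nat + sum_f_R0 (fun i => g (S i)) N).
    { pose proof (decomp_sum g (S N)) as E. simpl pred in E. rewrite <- E by lia. rewrite tech5. pose proof (Hg (S N)). lra. }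
    assert (0 <= sum_f_R0 (fun i => f (S i)) N) by (apply cond_pos_sum; auto).
    assert (0 <= sum_f_R0 (fun i => g (S i)) N) by (apply cond_pos_sum; auto).
    pose proof (Hf 0%nat). pose proof (Hg 0%nat).
    assert (sum_f_R0 (fun i => f (S i)) N * sum_f_R0 g N <=
            sum_f_R0 (fun i => f (S i)) N * (g 0%nat + sum_f_R0 (fun i => g (S i)) N))
      by (apply Rmult_le_compat_l; auto).
    cbv beta in IHN.
    change (sum_f_R0 (fun k => f k * g (0-k)%nat) 0) with (f 0%nat * g 0%nat).
    nra.
Qed.

Definition W (r : R) (u : nat -> R) N := sum_f_R0 (fun n => Rabs (u n) * r ^ n) N.

Lemma W_pos r u N : 0 <= r -> 0 <= W r u N.
Proof. intros. apply cond_pos_sum. intros. apply Rmult_le_pos. apply Rabs_pos. apply pow_le; auto. Qed.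

Lemma W_mult r u v N : 0 <= r -> W r (PS_mult u v) N <= W r u N * W r v N.
Proof.
  intros Hr. unfold W.
  eapply Rle_trans; [|apply conv].
  2:{ intros; apply Rmult_le_pos; [apply Rabs_pos|apply pow_le; auto]. }
  2:{ intros; apply Rmult_le_pos; [apply Rabs_pos|apply pow_le; auto]. }
  apply sum_Rle. intros n Hn. unfold PS_mult.
  eapply Rle_trans. apply Rmult_le_compat_r. apply pow_le; auto. apply Rsum_abs.
  rewrite Rmult_comm, scal_sum. right. apply sum_eq. intros k Hk.
  rewrite Rabs_mult. replace (r^n) with (r^k * r^(n-k)) by (rewrite <- pow_add; f_equal; lia). ring.
Qed.

Definition mon (k n : nat) : R := if Nat.eqb n k then 1 else 0.
Definition padd (u v : nat -> R) : nat -> R := fun n => u n + v n.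
Definition pscal (k : R) (u : nat -> R) : nat -> R := fun n => k * u n.

Definition Tm (a b : R) (u : nat -> R) : nat -> R :=
  padd (padd (padd (padd (pscal (-b) (mon 2)) (pscal (-a) (mon 3)))
     (pscal (-(3/2)) (PS_mult u u))) (pscal (-b) (PS_mult (mon 2) u)))
     (pscal (-/2) (PS_mult u (PS_mult u u))).

Lemma M1 u v w w' j : (forall i, (i <= j)%nat -> u i = v i) -> (forall i, (i <= j)%nat -> w i = w' i) ->
  PS_mult u w j = PS_mult v w' j.
Proof. intros H1 H2. unfold PS_mult. apply sum_eq. intros i Hi. rewrite H1, H2 by lia. auto. Qed.

Lemma M2 u v w w' m : u 0%nat = 0 -> v 0%nat = 0 -> w 0%nat = 0 -> w' 0%nat = 0 ->
  (forall i, (i < m)%nat -> u i = v i) -> (forall i, (i < m)%nat -> w i = w' i) ->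
  PS_mult u w m = PS_mult v w' m.
Proof.
  intros u0 v0 w0 w0' H1 H2. unfold PS_mult. apply sum_eq. intros k Hk.
  destruct (Nat.eq_dec k 0) as [->|Hk0]. rewrite u0, v0; ring.
  destruct (Nat.eq_dec k m) as [->|Hkm]. rewrite Nat.sub_diag, w0, w0'; ring.
  rewrite H1, H2 by lia. auto.
Qed.

Lemma mult00 u : u 0%nat = 0 -> PS_mult u u 0 = 0.
Proof. intros H. unfold PS_mult. simpl. rewrite H. ring. Qed.

Lemma dep a b u v m : (forall i, (i < m)%nat -> u i = v i) -> u 0%nat = 0 -> v 0%nat = 0 ->
  Tm a b u m = Tm a b v m.
Proof.
  intros H u0 v0. unfold Tm, padd, pscal.
  rewrite (M2 u v u v m), (M2 (mon 2) (mon 2) u v m), (M2 u v (PS_mult u u) (PS_mult v v) m); auto.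
  apply mult00; auto. apply mult00; auto.
  intros i Hi. apply M1; intros; apply H; lia.
Qed.

Definition It a b k := Nat.iter k (Tm a b) (fun _ => 0).

Lemma It_S a b k : It a b (S k) = Tm a b (It a b k).
Proof. reflexivity. Qed.

Lemma Tm0 a b u : u 0%nat = 0 -> Tm a b u 0 = 0.
Proof. intros H. unfold Tm, padd, pscal, PS_mult, mon. simpl. rewrite H. ring. Qed.

Lemma It0 a b k : It a b k 0 = 0.
Proof. induction k. reflexivity. rewrite It_S. apply Tm0; auto. Qed.

Lemma stab a b k : forall m, (m < k)%nat -> It a b (S k) m = It a b k m.
Proof.
  induction k; intros m Hm. lia.
  rewrite (It_S a b (S k)). change (It a b (S k) m) with (Tm a b (It a b k) m).
  apply dep; [intros i Hi; apply IHk; lia | apply It0 | apply It0].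
Qed.

Lemma stab2 a b d : forall k m, (m < k)%nat -> It a b (k + d) m = It a b k m.
Proof.
  induction d; intros k m Hm. rewrite Nat.add_0_r; auto.
  replace (k + S d)%nat with (S (k + d)) by lia. rewrite stab by lia. auto.
Qed.

Definition cf a b n := It a b (S n) n.

Lemma cf_It a b i m : (i <= m)%nat -> cf a b i = It a b (S m) i.
Proof. intros H. unfold cf. replace (S m) with (S i + (m - i))%nat by lia. rewrite stab2; auto. Qed.

Lemma cf0 a b : cf a b 0 = 0.
Proof. apply It0. Qed.

Lemma cf_fix a b m : cf a b m = Tm a b (cf a b) m.
Proof.
  assert (E : Tm a b (cf a b) m = Tm a b (It a b (S m)) m).
  { apply dep; [intros i Hi; apply cf_It; lia | apply cf0 | apply It0]. }
  rewrite E, <- It_S. unfold cf. symmetry. apply stab. lia.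
Qed.

Lemma cf1 a b : cf a b 1 = 0.
Proof. rewrite cf_fix. unfold Tm, padd, pscal, PS_mult, mon. simpl. rewrite cf0. ring. Qed.

Lemma W_add r u v N : 0 <= r -> W r (padd u v) N <= W r u N + W r v N.
Proof.
  intros Hr. unfold W, padd. rewrite <- plus_sum. apply sum_Rle. intros n _.
  rewrite <- Rmult_plus_distr_r. apply Rmult_le_compat_r. apply pow_le; auto. apply Rabs_triang.
Qed.

Lemma W_scal r k u N : W r (pscal k u) N = Rabs k * W r u N.
Proof. unfold W, pscal. rewrite <- sum_scal_l. apply sum_eq. intros. rewrite Rabs_mult. ring. Qed.

Lemma W_mon r k N : W r (mon k) N = if (k <=? N)%nat then r^k else 0.
Proof.
  induction N.
  - unfold W, mon. simpl. destruct k; simpl. rewrite Rabs_R1. ring. rewrite Rabs_R0. ring.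
  - unfold W in *. rewrite tech5, IHN. unfold mon.
    destruct (Nat.eqb_spec (S N) k) as [<-|Hne].
    + rewrite Rabs_R1. replace (S N <=? N)%nat with false by (symmetry; apply Nat.leb_gt; lia).
      rewrite Nat.leb_refl. ring.
    + rewrite Rabs_R0, Rmult_0_l, Rplus_0_r.
      destruct (Nat.leb_spec k N); destruct (Nat.leb_spec k (S N)); auto; lia.
Qed.

Lemma W_mon_le r k N : 0 <= r -> W r (mon k) N <= r^k.
Proof. intros. rewrite W_mon. destruct (k <=? N)%nat. lra. apply pow_le; auto. Qed.

Lemma W_term r u n : 0 <= r -> Rabs (u n) * r^n <= W r u n.
Proof.
  intros Hr. unfold W. destruct n. simpl. lra. rewrite tech5.
  assert (0 <= sum_f_R0 (fun n0 => Rabs (u n0) * r ^ n0) n).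
  { apply cond_pos_sum. intros. apply Rmult_le_pos. apply Rabs_pos. apply pow_le; auto. }
  lra.
Qed.

Lemma W_Tm a b r d N : 0 <= r ->
  W r (Tm a b d) N <= Rabs b * r^2 + Rabs a * r^3 + 3/2 * (W r d N)^2 + Rabs b * r^2 * W r d N
     + /2 * (W r d N)^3.
Proof.
  intros Hr. unfold Tm.
  pose proof (W_pos r d N Hr) as HD.
  pose proof (W_mult r d d N Hr) as Hdd.
  pose proof (W_mult r d (PS_mult d d) N Hr) as Hddd.
  pose proof (W_mult r (mon 2) d N Hr) as Hmd.
  pose proof (W_mon_le r 2 N Hr). pose proof (W_mon_le r 3 N Hr).
  pose proof (W_pos r (mon 2) N Hr).
  eapply Rle_trans. apply W_add; auto.
  eapply Rle_trans. apply Rplus_le_compat_r. apply W_add; auto.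
  eapply Rle_trans. apply Rplus_le_compat_r. apply Rplus_le_compat_r. apply W_add; auto.
  eapply Rle_trans. apply Rplus_le_compat_r. apply Rplus_le_compat_r. apply Rplus_le_compat_r. apply W_add; auto.
  rewrite !W_scal. rewrite !Rabs_Ropp, (Rabs_right (3/2)), (Rabs_right (/2)) by lra.
  pose proof (Rabs_pos a). pose proof (Rabs_pos b).
  assert (Rabs b * W r (PS_mult (mon 2) d) N <= Rabs b * r^2 * W r d N).
  { rewrite Rmult_assoc. apply Rmult_le_compat_l; auto. eapply Rle_trans; [apply Hmd|]. apply Rmult_le_compat_r; auto. }
  assert (W r (PS_mult d (PS_mult d d)) N <= (W r d N)^3).
  { eapply Rle_trans; [apply Hddd|]. replace ((W r d N)^3) with (W r d N * (W r d N)^2) by ring.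
    apply Rmult_le_compat_l; auto. simpl. lra. }
  assert (Rabs b * W r (mon 2) N <= Rabs b * r^2) by (apply Rmult_le_compat_l; auto).
  assert (Rabs a * W r (mon 3) N <= Rabs a * r^3) by (apply Rmult_le_compat_l; auto).
  simpl in *. lra.
Qed.

Lemma cf_step a b r N : 0 < r -> Rabs b * r^2 <= /100 -> Rabs b * r^2 + Rabs a * r^3 <= /100 ->
  (forall M, (M < N)%nat -> W r (cf a b) M <= /50) -> W r (cf a b) N <= /50.
Proof.
  intros Hr Hb Hab IH. set (c := cf a b).
  set (d := fun i => if (i <? N)%nat then c i else 0).
  assert (E : W r c N = W r (Tm a b d) N).
  { unfold W. apply sum_eq. intros n Hn. unfold c. rewrite cf_fix. f_equal. f_equal.
    apply dep.
    - intros i Hi. unfold d. destruct (Nat.ltb_spec i N); auto; lia.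
    - apply cf0.
    - unfold d. destruct (0 <? N)%nat; [apply cf0|reflexivity]. }
  assert (HD : W r d N <= /50).
  { destruct N.
    - unfold W, d. simpl. rewrite Rabs_R0. lra.
    - unfold W. rewrite tech5. unfold d at 2. rewrite (proj2 (Nat.ltb_ge _ _)) by lia.
      rewrite Rabs_R0, Rmult_0_l, Rplus_0_r.
      rewrite (sum_eq _ (fun n => Rabs (c n) * r^n)).
      apply IH. lia.
      intros i Hi. unfold d. rewrite (proj2 (Nat.ltb_lt _ _)) by lia. auto. }
  rewrite E. eapply Rle_trans. apply W_Tm. lra.
  pose proof (W_pos r d N ltac:(lra)).
  set (D := W r d N) in *.
  assert (D^2 <= /50 * D) by (simpl; nra).
  assert (D^3 <= /2500 * D) by (simpl; nra).
  assert (Rabs b * r^2 * D <= /100 * D) by (apply Rmult_le_compat_r; lra).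
  nra.
Qed.

Lemma cf_bound a b r : 0 < r -> Rabs b * r^2 <= /100 -> Rabs b * r^2 + Rabs a * r^3 <= /100 ->
  forall N, W r (cf a b) N <= /50.
Proof.
  intros Hr Hb Hab.
  assert (forall N M, (M <= N)%nat -> W r (cf a b) M <= /50).
  { induction N; intros M HM.
    - apply cf_step; auto. intros; lia.
    - apply cf_step; auto. intros M' HM'. apply IHN. lia. }
  intros N; apply (H N); lia.
Qed.

Lemma cf_good a b r : 0 < r -> Rabs b * r^2 <= /100 -> Rabs b * r^2 + Rabs a * r^3 <= /100 ->
  forall x, Rabs x < r -> ex_pseries (cf a b) x.
Proof.
  intros Hr Hb Hab x Hx. apply CV_radius_inside.
  destruct (CV_radius_bounded (cf a b)) as [Hub _].
  assert (Rbar_le r (CV_radius (cf a b))).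
  { apply Hub. exists (/50). intros n.
    rewrite Rabs_mult, (Rabs_right (r^n)) by (apply Rle_ge, pow_le; lra).
    eapply Rle_trans. apply W_term. lra. apply cf_bound; auto. }
  eapply Rbar_lt_le_trans; [|exact H]. simpl. auto.
Qed.

Lemma exists_r a b : exists r, 0 < r /\ Rabs b * r^2 <= /100 /\ Rabs b * r^2 + Rabs a * r^3 <= /100.
Proof.
  pose proof (Rabs_pos a). pose proof (Rabs_pos b).
  set (K := 1 + Rabs a + Rabs b).
  exists (/(10 * K)).
  assert (HK : 1 <= K) by (unfold K; lra).
  assert (Hr : 0 < /(10*K)) by (apply Rinv_0_lt_compat; lra).
  set (r := /(10*K)) in *.
  assert (Hr1 : r * (10 * K) = 1) by (unfold r; field; lra).
  assert (Hr2 : r <= /10) by (unfold r; apply Rinv_le_contravar; lra).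
  assert (Hbr : Rabs b * r <= /10) by (unfold K in Hr1; nra).
  assert (Har : Rabs a * r <= /10) by (unfold K in Hr1; nra).
  assert (Habr : (Rabs a + Rabs b) * r <= /10) by (unfold K in Hr1; nra).
  split; auto. split.
  - simpl. nra.
  - simpl. assert (Rabs a * r * r <= Rabs a * r) by nra. nra.
Qed.

Definition good (r : R) (u : nat -> R) := forall x, Rabs x < r -> ex_pseries u x.

Lemma good_add r u v : good r u -> good r v -> good r (padd u v).
Proof. intros Hu Hv x Hx. apply (ex_pseries_ext (PS_plus u v)). intros; reflexivity.
  apply ex_pseries_plus; auto. Qed.

Lemma good_scal r k u : good r u -> good r (pscal k u).
Proof. intros Hu x Hx. apply (ex_pseries_ext (PS_scal k u)). intros; reflexivity.
  apply ex_pseries_scal; auto. apply Rmult_comm. Qed.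

Lemma good_mult r u v : good r u -> good r v -> good r (PS_mult u v).
Proof. intros Hu Hv x Hx. apply ex_pseries_mult; apply (good_cv _ r); auto. Qed.

Lemma mon0_is x : is_pseries (mon 0) x 1.
Proof.
  apply is_pseries_Reals. intros eps He. exists 0%nat. intros n _.
  assert (sum_f_R0 (fun n => mon 0 n * x^n) n = 1).
  { induction n. unfold mon. simpl. ring. rewrite tech5, IHn. unfold mon. simpl. ring. }
  rewrite H. unfold R_dist. rewrite Rminus_diag, Rabs_R0. lra.
Qed.

Lemma mon_is k x : is_pseries (mon k) x (x^k).
Proof.
  apply (is_pseries_ext (PS_incr_n (mon 0) k)).
  - intros n. rewrite PS_incr_n_simplify. unfold mon.
    destruct (Compare_dec.le_lt_dec k n).
    + destruct (Nat.eqb_spec (n - k) 0); destruct (Nat.eqb_spec n k); auto; lia.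
    + destruct (Nat.eqb_spec n k); [lia|reflexivity].
  - replace (x^k) with (scal (pow_n x k) 1).
    exact (@is_pseries_incr_n R_AbsRing R_NormedModule (mon 0) k x 1 (mon0_is x)).
    rewrite pow_n_pow. unfold scal; simpl. unfold mult; simpl. ring.
Qed.

Lemma good_mon r k : good r (mon k).
Proof. intros x _. exists (x^k). apply mon_is. Qed.

Lemma V_add r u v x : good r u -> good r v -> Rabs x < r ->
  PSeries (padd u v) x = PSeries u x + PSeries v x.
Proof. intros. rewrite (PSeries_ext _ (PS_plus u v)) by reflexivity. apply PSeries_plus; auto. Qed.

Lemma V_scal k u x : PSeries (pscal k u) x = k * PSeries u x.
Proof. rewrite (PSeries_ext _ (PS_scal k u)) by reflexivity. apply PSeries_scal. Qed.

Lemma V_mult r u v x : good r u -> good r v -> Rabs x < r ->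
  PSeries (PS_mult u v) x = PSeries u x * PSeries v x.
Proof. intros. apply PSeries_mult; apply (good_cv _ r); auto. Qed.

Lemma V_mon k x : PSeries (mon k) x = x^k.
Proof. apply is_pseries_unique, mon_is. Qed.

#[export] Hint Resolve good_add good_scal good_mult good_mon : good.

Lemma exists_phi h11 h20 h31 h40 : exists (delta : R) (phi : R -> R) (p A : nat -> R),
  0 < delta /\ p 0%nat = 0 /\ p 1%nat = 0 /\
  (forall x, Rabs x < delta -> is_pseries p x (phi x)) /\
  (forall x, Rabs x < delta -> Hy (H2bar h11 h20 h31 h40) x (phi x) = 0) /\
  (forall x, Rabs x < delta -> is_pseries A x (H2bar h11 h20 h31 h40 x (phi x))).
Proof.
  set (a := aa h11 h20 h31). set (b := bb h11 h20).
  destruct (exists_r a b) as [r [Hr [Hb Hab]]].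
  set (c := cf a b).
  assert (Hc : good r c) by (intros x Hx; apply cf_good with r; auto).
  set (c2 := PS_mult c c).
  set (A := padd (padd (padd (padd (padd (padd (padd (pscal (/2) c2) (pscal a (mon 3)))
     (pscal b (PS_mult (mon 2) c))) (pscal (/2) (PS_mult c c2))) (pscal (cc h11 h20 h31 h40) (mon 4)))
     (pscal a (PS_mult (mon 3) c))) (pscal (2 * h20 - h11^2) (PS_mult (mon 2) c2))) (pscal (/8) (PS_mult c2 c2))).
  assert (HA : good r A) by (unfold A, c2; auto 20 with good).
  exists r, (PSeries c), c, A. split; auto. split; [apply cf0|]. split; [apply cf1|].
  split; [|split].
  - intros x Hx. apply PSeries_correct. apply Hc; auto.
  - intros x Hx. rewrite HyE. fold a b.
    assert (E : PSeries c x = PSeries (Tm a b c) x) by (apply PSeries_ext; intros; apply cf_fix).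
    unfold Tm in E.
    repeat first [ rewrite V_scal in E | rewrite V_mon in E
      | rewrite (V_add r) in E by (auto 20 with good) | rewrite (V_mult r) in E by (auto 20 with good) ].
    set (y := PSeries c x) in *. nra.
  - intros x Hx.
    replace (H2bar h11 h20 h31 h40 x (PSeries c x)) with (PSeries A x).
    apply PSeries_correct. apply HA; auto.
    unfold A, c2.
    repeat first [ rewrite V_scal | rewrite V_mon
      | rewrite (V_add r) by (auto 20 with good) | rewrite (V_mult r) by (auto 20 with good) ].
    unfold H2bar, a, b, aa, bb, cc. ring.
Qed.

Lemma condA_iff h11 h20 h31 : h31 <> -2 * h11 * h20 <-> aa h11 h20 h31 <> 0.
Proof. unfold aa. split; intros H E; apply H; lra. Qed.

Lemma c_rel h11 h20 h31 h40 : aa h11 h20 h31 = 0 ->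
  cc h11 h20 h31 h40 - bb h11 h20 ^2 / 2 = -8 * (h20^2 + h40).
Proof. unfold aa, cc, bb. intros H. assert (h31 = -2*h11*h20) by lra. subst h31. field. Qed.

Lemma iso_iff h11 h20 h31 h40 :
  isolated_nilpotent_singular_origin (H2bar h11 h20 h31 h40) <->
  (aa h11 h20 h31 <> 0 \/ cc h11 h20 h31 h40 <> bb h11 h20 ^2 / 2).
Proof.
  unfold isolated_nilpotent_singular_origin, isolated_singular_origin, singular_origin, field1, field2.
  rewrite !HyE, !HxE.
  split.
  - intros [[_ [eps [He Hiso]]] _].
    destruct (Req_dec (aa h11 h20 h31) 0) as [Ha|Ha]; [right|left; auto].
    intros Hc. destruct (noniso (bb h11 h20) (cc h11 h20 h31 h40) Hc eps He) as [x [y [Hxy [E1 E2]]]].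
    apply (Hiso x y Hxy). rewrite !HyE, !HxE, Ha. split; lra.
  - intros Hd. split; [|apply nilp]. split. split; ring.
    destruct Hd as [Ha|Hc].
    + destruct (iso_a (aa h11 h20 h31) (bb h11 h20) (cc h11 h20 h31 h40) Ha) as [eps [He Hi]].
      exists eps. split; auto. intros x y Hxy. rewrite !HyE, !HxE. apply Hi; auto.
    + destruct (Req_dec (aa h11 h20 h31) 0) as [Ha|Ha].
      * destruct (iso_0 (aa h11 h20 h31) (bb h11 h20) (cc h11 h20 h31 h40) Ha Hc) as [eps [He Hi]].
        exists eps. split; auto. intros x y Hxy. rewrite !HyE, !HxE. apply Hi; auto.
      * destruct (iso_a (aa h11 h20 h31) (bb h11 h20) (cc h11 h20 h31 h40) Ha) as [eps [He Hi]].
        exists eps. split; auto. intros x y Hxy. rewrite !HyE, !HxE. apply Hi; auto.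
Qed.

Theorem theorem5 (h11 h20 h31 h40 : R) :
  let H := H2bar h11 h20 h31 h40 in
  let condA := h31 <> -2 * h11 * h20 in
  let condB := h31 = -2 * h11 * h20 /\ 0 < h20 ^ 2 + h40 in
  let condC := h31 = -2 * h11 * h20 /\ h20 ^ 2 + h40 < 0 in
  (isolated_nilpotent_singular_origin H <-> (condA \/ condB \/ condC)) /\
  (cusp_of_order H 1 <-> condA) /\
  (nilpotent_saddle_of_order H 1 <-> condB) /\
  (nilpotent_center_of_order H 1 <-> condC).
Proof.
  intros H condA condB condC. subst H condA condB condC.
  assert (Hiff : forall P : Prop, (P <-> aa h11 h20 h31 = 0) -> (h31 = -2*h11*h20 <-> P)) by
    (intros P HP; rewrite HP; unfold aa; split; intros; lra).
  assert (HA0 : h31 = -2*h11*h20 <-> aa h11 h20 h31 = 0) by (unfold aa; split; intros; lra).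
  destruct (exists_phi h11 h20 h31 h40) as [d0 [phi0 [p0 [A0 [Hd0 [Hp00 [Hp01 [Hpp0 [Hy0 HA0']]]]]]]]].
  destruct (asym h11 h20 h31 h40 d0 phi0 p0 A0 Hd0 Hp00 Hp01 Hpp0 Hy0 HA0') as [Z0 [Z1 [Z2 [Z3 Z4]]]].
  split; [|split; [|split]].
  - rewrite iso_iff. split.
    + intros [Ha|Hc].
      * left. intro E. apply Ha. unfold aa. lra.
      * destruct (Req_dec (aa h11 h20 h31) 0) as [Ha|Ha].
        -- right. pose proof (c_rel h11 h20 h31 h40 Ha).
           assert (h20^2 + h40 <> 0) by (intro; apply Hc; lra).
           destruct (Rlt_or_le 0 (h20^2+h40)); [left|right]; split; try (apply HA0; auto); lra.
        -- left. intro E. apply Ha. unfold aa. lra.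
    + intros [HA|[[HB1 HB2]|[HC1 HC2]]].
      * left. intro E; apply HA. unfold aa in E; lra.
      * right. apply HA0 in HB1. pose proof (c_rel h11 h20 h31 h40 HB1). lra.
      * right. apply HA0 in HC1. pose proof (c_rel h11 h20 h31 h40 HC1). lra.
  - split.
    + intros [hk [d [Hd [phi [p [a [Hp0 [Hp1 [Hp [Hy [Ha [Hz [Hk Hnz]]]]]]]]]]]]].
      destruct (asym h11 h20 h31 h40 d phi p a Hd Hp0 Hp1 Hp Hy Ha) as [_ [_ [_ [W3 _]]]].
      simpl in Hk. intro E. apply Hnz. rewrite <- Hk, W3. unfold aa. lra.
    + intros HA. exists (aa h11 h20 h31). exists d0. split; auto. exists phi0, p0, A0.
      repeat split; auto.
      * intros j Hj. simpl in Hj. destruct j as [|[|[|j]]]; auto; lia.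
      * intro E. apply HA. unfold aa in E. lra.
  - split.
    + intros [hk [[d [Hd [phi [p [a [Hp0 [Hp1 [Hp [Hy [Ha [Hz [Hk Hnz]]]]]]]]]]]] Hneg]].
      destruct (asym h11 h20 h31 h40 d phi p a Hd Hp0 Hp1 Hp Hy Ha) as [_ [_ [_ [W3 W4]]]].
      simpl in Hk.
      assert (Ha0 : aa h11 h20 h31 = 0) by (rewrite <- W3; apply Hz; lia).
      split. apply HA0; auto.
      rewrite W4, c_rel in Hk by auto. lra.
    + intros [HB1 HB2]. apply HA0 in HB1.
      exists (A0 4%nat). split.
      * exists d0. split; auto. exists phi0, p0, A0. repeat split; auto.
        -- intros j Hj. simpl in Hj. destruct j as [|[|[|[|j]]]]; auto; try lia. rewrite Z3; auto.
        -- rewrite Z4, c_rel by auto. lra.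
      * rewrite Z4, c_rel by auto. lra.
  - split.
    + intros [hk [[d [Hd [phi [p [a [Hp0 [Hp1 [Hp [Hy [Ha [Hz [Hk Hnz]]]]]]]]]]]] Hpos]].
      destruct (asym h11 h20 h31 h40 d phi p a Hd Hp0 Hp1 Hp Hy Ha) as [_ [_ [_ [W3 W4]]]].
      simpl in Hk.
      assert (Ha0 : aa h11 h20 h31 = 0) by (rewrite <- W3; apply Hz; lia).
      split. apply HA0; auto.
      rewrite W4, c_rel in Hk by auto. lra.
    + intros [HC1 HC2]. apply HA0 in HC1.
      exists (A0 4%nat). split.
      * exists d0. split; auto. exists phi0, p0, A0. repeat split; auto.
        -- intros j Hj. simpl in Hj. destruct j as [|[|[|[|j]]]]; auto; try lia. rewrite Z3; auto.
        -- rewrite Z4, c_rel by auto. lra.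
      * rewrite Z4, c_rel by auto. lra.
Qed.
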